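(* Let $f_0(n)=1$ for odd $n$ and $f_0(n)=0$ for even $n$. Then for $1\le k\le n$, $c_1(n,k)$ equals the number of binary words of length $n-1$ with exactly $k-1$ ones that avoid runs of zeros of odd length (every maximal block of consecutive zeros has even length).
   Context: The numbers $c_1(n,k)$, $0\le k\le n$, are defined by $c_1(0,0)=1$, $c_1(n,0)=0$ for $n\ge1$, and $c_1(n,k)=\sum_{i=1}^{n-k+1}f_{0}(i)\,c_1(n-i,k-1)$ for $1\le k\le n$. Words may be empty. *)

(* Defs.v *)
From mathcomp Require Import all_boot.
Set Implicit Arguments. Unset Strict Implicit. Unset Printing Implicit Defensive.

Definition f0 (n : nat) : nat := odd n.

Fixpoint c1 (n k : nat) {struct k} : nat :=
  match k with
  | 0 => (n == 0)
  | k'.+1 => \sum_(1 <= i < (n - k).+2) f0 i * c1 (n - i) k'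
  end.

(* A maximal block of zeros of w occupies positions i, ..., j-1 (i < j):
   all these are false (= zero), and it is bounded by a one or the word's ends. *)
Definition maximal_zero_run (w : seq bool) (i j : nat) : bool :=
  [&& i < j, j <= size w,
      all (fun p => ~~ nth false w p) (iota i (j - i)),
      (i == 0) || nth false w i.-1
    & (j == size w) || nth false w j].

Definition avoids_odd_zero_runs (w : seq bool) : bool :=
  all (fun i => all (fun j => maximal_zero_run w i j ==> ~~ odd (j - i))
                    (iota 0 (size w).+1))
      (iota 0 (size w).+1).

(* Main.v *)
Require Import Defs.
From mathcomp Require Import all_boot zify.

Fixpoint words (m : nat) : seq (seq bool) :=
  if m is m'.+1 then map (cons false) (words m') ++ map (cons true) (words m')
  else [:: [::]].

Lemma mem_words m s : (s \in words m) = (size s == m).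
Proof.
elim: m s => [|m IH] s; first by case: s.
case: s => [|b s] /=.
  by rewrite mem_cat; apply/negbTE/norP; split; apply/mapP => [[x _ //]].
rewrite mem_cat eqSS; case: b.
- apply/idP/idP.
  + case/orP => /mapP [x Hx] [E]; first by [].
    by rewrite -IH E.
  + by rewrite -IH => H; apply/orP; right; apply/mapP; exists s.
- apply/idP/idP.
  + case/orP => /mapP [x Hx] [E]; last by [].
    by rewrite -IH E.
  + by rewrite -IH => H; apply/orP; left; apply/mapP; exists s.
Qed.

Lemma uniq_words m : uniq (words m).
Proof.
elim: m => [|m IH] //=.
rewrite cat_uniq !map_inj_uniq ?IH /=; try by move=> x y [].
rewrite andbT; apply/hasPn => x /mapP [y _ ->]; apply/mapP => [[z _ //]].
Qed.

Lemma card_count m (P : pred (seq bool)) :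
  #|[set w : m.-tuple bool | P w]| = count P (words m).
Proof.
transitivity (count P (map val (enum {: m.-tuple bool}))).
rewrite count_map cardsE cardE /enum_mem size_filter count_filter.
by apply: eq_count => x; rewrite /= andbT.
suff /permP -> : perm_eq (map val (enum {: m.-tuple bool})) (words m) by [].
apply: uniq_perm; rewrite ?uniq_words //.
  rewrite map_inj_uniq; [exact: enum_uniq | exact: val_inj].
move=> s; rewrite mem_words; apply/mapP/idP.
  by case=> t _ ->; rewrite size_tuple.
move=> H; exists (Tuple H) => //; by rewrite mem_enum.
Qed.
Definition Z (w : seq bool) j :=
  [&& j <= size w, all (fun p => ~~ nth false w p) (iota 0 j) & (j == size w) || nth false w j].

Lemma iotaS1 i n : iota i.+1 n = map succn (iota i n).
Proof. by rewrite -add1n iotaDl. Qed.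

Lemma mzr_cons b w i j : maximal_zero_run (b :: w) i j =
  if i is i'.+1 then (if j is j'.+1 then maximal_zero_run w i' j' && ((i' != 0) || b) else false)
  else (if j is j'.+1 then ~~ b && Z w j' else false).
Proof.
rewrite /maximal_zero_run /Z.
case: i => [|i]; case: j => [|j] //=.
- rewrite ltnS iotaS1 all_map eqSS /=.
  by case: b => //=; rewrite ?andbF.
- rewrite !ltnS subSS iotaS1 all_map eqSS /=.
  case: i => [|i] /=; case: b => //=; by rewrite ?andbT ?andbF.
Qed.

Lemma mzr_0 w j : maximal_zero_run w 0 j = (0 < j) && Z w j.
Proof. by rewrite /maximal_zero_run /Z subn0. Qed.

Lemma ZS b w j : Z (b :: w) j.+1 = ~~ b && Z w j.
Proof. by rewrite -[Z _ _]/(true && _) -(mzr_0 (b :: w) j.+1) mzr_cons. Qed.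

Lemma Z0 b w : Z (b :: w) 0 = b.
Proof. by rewrite /Z. Qed.

Fixpoint ok (w : seq bool) : bool :=
  match w with
  | [::] => true
  | true :: w' => ok w'
  | false :: false :: w' => ok w'
  | _ => false
  end.

Definition A w := forall i j, maximal_zero_run w i j -> ~~ odd (j - i).

Lemma avoidsP w : reflect (A w) (avoids_odd_zero_runs w).
Proof.
apply: (iffP allP) => H.
- move=> i j M.
  have Hi : i \in iota 0 (size w).+1.
    by move: M; rewrite mem_iota /maximal_zero_run => /and5P[]; lia.
  have Hj : j \in iota 0 (size w).+1.
    by move: M; rewrite mem_iota /maximal_zero_run => /and5P[]; lia.
  by move: (H i Hi) => /allP /(_ j Hj) /implyP; apply.
- move=> i _; apply/allP => j _; apply/implyP; exact: H.
Qed.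

Lemma A_true w : A (true :: w) <-> A w.
Proof.
split=> H i j M.
- have := H i.+1 j.+1; rewrite mzr_cons M orbT subSS; by apply.
- move: M; rewrite mzr_cons; case: i => [|i]; case: j => [|j] //=.
  rewrite orbT andbT subSS; exact: H.
Qed.

Lemma A_ff w : A [:: false, false & w] <-> A w.
Proof.
split=> H i j M.
- case: i M => [|i] M.
  + have := H 0 j.+2; rewrite !mzr_cons /= ZS /= negbK subn0; apply.
    by move: M; rewrite mzr_0 => /andP[].
  + have := H i.+3 j.+2; rewrite !mzr_cons /= !subSS M; by apply.
- move: M; rewrite !mzr_cons; case: i => [|[|i]]; case: j => [|[|j]] //=.
  + case: j => [|j] //; rewrite ZS /= => Zj.
    have := H 0 j.+1; rewrite mzr_0 Zj subn0 /= !negbK; by apply.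
  + by rewrite andbF.
  + rewrite andbT mzr_cons; case: j => [|j] //.
    case: i => [|i]; first by rewrite andbF.
    rewrite /= andbT => M; have := H _ _ M; by rewrite !subSS.
Qed.

Lemma ok_avoids w : ok w = avoids_odd_zero_runs w.
Proof.
have [n] := ubnP (size w); elim: n w => [|n IH] w Hs; first by case: w Hs.
case: w Hs => [|b w] Hs.
  apply/esym/avoidsP => i j; rewrite /maximal_zero_run /= => /and5P[]; lia.
case: b Hs => Hs /=.
- rewrite IH /=; last by move: Hs => /=; lia.
  apply/idP/idP => /avoidsP H; apply/avoidsP; apply/A_true => //.
- case: w Hs => [|[] w] Hs /=.
  + apply/esym/negbTE/avoidsP => H; by have := H 0 1 isT.
  + apply/esym/negbTE/avoidsP => H; have := H 0 1; by rewrite mzr_cons /= Z0 => /(_ isT).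
  + rewrite IH; last by move: Hs => /=; lia.
    apply/idP/idP => /avoidsP H; apply/avoidsP; apply/A_ff => //.
Qed.

Definition N m j := count (fun w => (count id w == j) && ok w) (words m).

Lemma N0 j : N 0 j = (j == 0).
Proof. by rewrite /N /=; case: j. Qed.

Lemma N1 j : N 1 j = (j == 1).
Proof. by rewrite /N /=; case: j => [|[|j]]. Qed.

Lemma wordsS m : words m.+1 = map (cons false) (words m) ++ map (cons true) (words m).
Proof. by []. Qed.

Lemma NSS m j : N m.+2 j = N m j + (if j is j'.+1 then N m.+1 j' else 0).
Proof.
rewrite {1}/N wordsS count_cat !count_map.
congr (_ + _).
  rewrite wordsS count_cat !count_map.
  have -> : count (preim (cons true) (preim (cons false) (fun w => (count id w == j) && ok w))) (words m) = 0.
    by apply/eqP; rewrite eqn0Ngt -has_count; apply/hasPn => w _ /=; rewrite ?andbF.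
  by rewrite addn0; apply: eq_count => w /=.
case: j => [|j].
  by apply/eqP; rewrite eqn0Ngt -has_count; apply/hasPn => w _ /=; rewrite ?andbF.
by apply: eq_count => w /=; rewrite eqSS.
Qed.

Lemma N_gt m j : m < j -> N m j = 0.
Proof.
move=> H; apply/eqP; rewrite eqn0Ngt -has_count; apply/hasPn => w.
rewrite mem_words => /eqP Hs /=; apply/negP => /andP[/eqP E _].
by have := count_size id w; rewrite E Hs leqNgt H.
Qed.

Lemma N_zero m : N m 0 = ~~ odd m.
Proof.
suff : N m 0 = ~~ odd m /\ N m.+1 0 = ~~ odd m.+1 by case.
elim: m => [|m [IH1 IH2]]; first by rewrite N0 N1.
split=> //; by rewrite NSS addn0 IH1 /= negbK.
Qed.

Lemma Nsum m j : N m j.+1 = \sum_(1 <= i < m.+1) f0 i * N (m - i) j.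
Proof.
suff : forall j, (N m j.+1 = \sum_(1 <= i < m.+1) f0 i * N (m - i) j) /\
  (N m.+1 j.+1 = \sum_(1 <= i < m.+2) f0 i * N (m.+1 - i) j) by move/(_ j) => [].
elim: m => [|m IH] {}j.
  by rewrite N0 N1 big_geq // big_nat1 /f0 /= N0 mul1n.
split; first by case: (IH j).
rewrite NSS (proj1 (IH j)).
rewrite (@big_nat_recl _ _ _ m.+2 1) // (@big_nat_recl _ _ _ m.+1 1) //.
rewrite /f0 /= mul1n mul0n add0n subn1 /=.
rewrite addnC; congr (_ + _).
apply: eq_bigr => i _; by rewrite !subSS negbK.
Qed.

Lemma c1N n k : 1 <= k <= n -> c1 n k = N n.-1 k.-1.
Proof.
elim: k n => [|k IH] n; first by [].
move=> /andP[_ Hkn].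
case: k IH Hkn => [|k] IH Hkn.
- rewrite N_zero; have -> : c1 n 1 = \sum_(1 <= i < (n - 1).+2) f0 i * (n - i == 0) by [].
  have -> : (n - 1).+2 = n.+1 by lia.
  rewrite big_nat_recr /=; last by lia.
  rewrite big_nat_cond big1 ?add0n.
    rewrite subnn /f0 muln1; case: n Hkn => [|n] //= _; by rewrite negbK.
  move=> i /andP[/andP[_ Hi] _]; rewrite subn_eq0 leqNgt Hi /= muln0 //.
- have -> : c1 n k.+2 = \sum_(1 <= i < (n - k.+2).+2) f0 i * c1 (n - i) k.+1 by [].
  rewrite Nsum.
  have -> : n.-1.+1 = n by lia.
  have T : \sum_((n - k.+2).+2 <= i < n) f0 i * N (n.-1 - i) k = 0.
    rewrite big_nat_cond big1 // => i /andP[/andP[Hi1 Hi2] _].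
    rewrite N_gt ?muln0 //; lia.
  rewrite [in RHS](@big_cat_nat _ _ _ (n - k.+2).+2); [|lia|lia].
  rewrite T Monoid.mulm1.
  rewrite big_nat_cond [in RHS]big_nat_cond.
  apply: eq_bigr => i /andP[/andP[Hi1 Hi2] _].
  rewrite IH; last by lia.
  congr (_ * N _ _); lia.
Qed.

Theorem corollary22 (n k : nat) : 1 <= k <= n ->
  c1 n k = #|[set w : (n.-1).-tuple bool |
               (count id w == k.-1) && avoids_odd_zero_runs w]|.
Proof.
move=> H; rewrite (card_count _ (fun w => (count id w == k.-1) && avoids_odd_zero_runs w)).
rewrite c1N // /N; apply: eq_count => w; by rewrite ok_avoids.
Qed.
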